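(* Let $\psi$ and $\tilde\psi$ be twice differentiable, increasing, nonvanishing functions on $(0,\infty)$ (not necessarily complete Bernstein functions). For $\lambda>0$ define \[\vartheta_\lambda=\frac1\pi\int_0^1\frac{1}{1-\zeta^2}\log\frac{\psi_\lambda(\lambda^2/\zeta^2)}{\psi_\lambda(\lambda^2\zeta^2)}\,d\zeta,\] and define $\tilde\vartheta_\lambda$ in the same way using $\tilde\psi_\lambda$; assume these integrals converge and are finite. If $-\psi''(\xi)/\psi'(\xi)\le-\tilde\psi''(\xi)/\tilde\psi'(\xi)$ for all $\xi>0$, then $\vartheta_\lambda\le\tilde\vartheta_\lambda$ for all $\lambda>0$.
   Context: For $\lambda,\xi>0$, $\xi\ne\lambda^2$, $\psi_\lambda(\xi)=\dfrac{1-\xi/\lambda^2}{1-\psi(\xi)/\psi(\lambda^2)}$, extended continuously by $\psi_\lambda(\lambda^2)=\psi(\lambda^2)/(\lambda^2\psi'(\lambda^2))$; $\tilde\psi_\lambda$ is defined analogously from $\tilde\psi$. *)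

(* Defs.v *)
From Stdlib Require Import Reals.
From Coquelicot Require Import Coquelicot.
Open Scope R_scope.

Definition psil (psi : R -> R) (lam xi : R) : R :=
  if Req_EM_T xi (lam ^ 2) then psi (lam ^ 2) / (lam ^ 2 * Derive psi (lam ^ 2))
  else (1 - xi / lam ^ 2) / (1 - psi xi / psi (lam ^ 2)).

Definition theta_integrand (psi : R -> R) (lam z : R) : R :=
  / (1 - z ^ 2) * ln (psil psi lam (lam ^ 2 / z ^ 2) / psil psi lam (lam ^ 2 * z ^ 2)).

Definition vartheta (psi : R -> R) (lam : R) : R :=
  / PI * RInt_gen (theta_integrand psi lam) (at_right 0) (at_left 1).

Definition twice_diff_pos (psi : R -> R) : Prop :=
  forall x, 0 < x -> ex_derive psi x /\ ex_derive (Derive psi) x.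

(* Main.v *)
Require Import Defs.
From Stdlib Require Import Reals Lra.
From Coquelicot Require Import Coquelicot.
Open Scope R_scope.

Lemma mvt_nonneg (f df : R -> R) x y : x <= y ->
  (forall t, x <= t <= y -> is_derive f t (df t)) ->
  (forall t, x <= t <= y -> 0 <= df t) -> f x <= f y.
Proof.
  intros Hxy Hd Hs.
  destruct (MVT_gen f x y df) as [c [Hc E]].
  - intros t Ht. rewrite Rmin_left in Ht by lra. rewrite Rmax_right in Ht by lra.
    apply Hd; lra.
  - intros t Ht. rewrite Rmin_left in Ht by lra. rewrite Rmax_right in Ht by lra.
    apply continuity_pt_filterlim. apply (ex_derive_continuous f).
    exists (df t). apply Hd; lra.
  - rewrite Rmin_left in Hc by lra. rewrite Rmax_right in Hc by lra.
    assert (0 <= df c * (y - x)) by (apply Rmult_le_pos; [apply Hs; lra| lra]).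
    lra.
Qed.

Section K.
Variables psi psit : R -> R.
Hypothesis H1 : twice_diff_pos psi.
Hypothesis H2 : twice_diff_pos psit.
Hypothesis D1 : forall xi, 0 < xi -> 0 < Derive psi xi.
Hypothesis D2 : forall xi, 0 < xi -> 0 < Derive psit xi.
Hypothesis Inc : forall x y, 0 < x -> x < y -> psi x < psi y.
Hypothesis HC : forall xi, 0 < xi ->
     - Derive (Derive psi) xi / Derive psi xi <=
     - Derive (Derive psit) xi / Derive psit xi.

Definition hh x := Derive psit x / Derive psi x.

Lemma hh_decr x y : 0 < x -> x <= y -> hh y <= hh x.
Proof.
  intros Hx Hxy.
  assert (- hh x <= - hh y); [|lra].
  apply (mvt_nonneg (fun t => - hh t)
    (fun t => - ((Derive (Derive psit) t * Derive psi t - Derive psit t * Derive (Derive psi) t) / Derive psi t ^ 2))); auto.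
  - intros t Ht. apply (is_derive_opp (fun t => hh t)).
    unfold hh. apply is_derive_div.
    + apply Derive_correct. apply H2; lra.
    + apply Derive_correct. apply H1; lra.
    + apply Rgt_not_eq, D1; lra.
  - intros t Ht. assert (t0 : 0 < t) by lra.
    specialize (HC t t0). specialize (D1 t t0). specialize (D2 t t0).
    set (a := Derive (Derive psi) t) in *. set (b := Derive (Derive psit) t) in *.
    set (p := Derive psi t) in *. set (q := Derive psit t) in *.
    assert (b * p - q * a <= 0).
    { assert (E: b / q <= a / p) by lra.
      apply (Rmult_le_compat_r (p*q)) in E; [|nra].
      replace (b / q * (p * q)) with (b*p) in E by (field; lra).
      replace (a / p * (p * q)) with (a*q) in E by (field; lra). lra. }
    assert (0 < p ^ 2) by nra.
    assert ((b * p - q * a) / p ^ 2 <= 0); [|lra].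
    unfold Rdiv. assert (0 < / p^2) by (apply Rinv_0_lt_compat; lra). nra.
Qed.

Lemma key b c a : 0 < b -> b < c -> c < a ->
  (psi c - psi b) * (psit a - psit c) <= (psit c - psit b) * (psi a - psi c).
Proof.
  intros Hb Hbc Hca.
  set (k := hh c).
  assert (Dk : forall t, 0 < t -> is_derive (fun x => psit x - k * psi x) t (Derive psit t - k * Derive psi t)).
  { intros t Ht. apply (is_derive_minus psit (fun x => k * psi x)).
    - apply Derive_correct, H2; lra.
    - apply is_derive_scal, Derive_correct, H1; lra. }
  assert (E1 : psit b - k * psi b <= psit c - k * psi c).
  { apply (mvt_nonneg (fun x => psit x - k * psi x) (fun t => Derive psit t - k * Derive psi t)); [lra| intros; apply Dk; lra|].
    intros t Ht. assert (hh c <= hh t) by (apply hh_decr; lra).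
    unfold hh in *. fold k in H. assert (0 < Derive psi t) by (apply D1; lra).
    apply (Rmult_le_compat_r (Derive psi t)) in H; [|lra].
    replace (Derive psit t / Derive psi t * Derive psi t) with (Derive psit t) in H by (field; lra). lra. }
  assert (E2 : psit a - k * psi a <= psit c - k * psi c).
  { assert (- (psit c - k * psi c) <= - (psit a - k * psi a)); [|lra].
    apply (mvt_nonneg (fun x => - (psit x - k * psi x)) (fun t => - (Derive psit t - k * Derive psi t))); [lra| intros; apply (is_derive_opp (fun x => psit x - k * psi x)), Dk; lra|].
    intros t Ht. assert (hh t <= hh c) by (apply hh_decr; lra).
    unfold hh in *. fold k in H. assert (0 < Derive psi t) by (apply D1; lra).
    apply (Rmult_le_compat_r (Derive psi t)) in H; [|lra].
    replace (Derive psit t / Derive psi t * Derive psi t) with (Derive psit t) in H by (field; lra). lra. }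
  assert (Hk : 0 < k) by (unfold k, hh; apply Rdiv_lt_0_compat; [apply D2|apply D1]; lra).
  assert (P : 0 < psi c - psi b) by (apply Rlt_0_minus, Inc; lra).
  assert (Q : 0 < psi a - psi c) by (apply Rlt_0_minus, Inc; lra).
  set (P0 := psi c - psi b) in *. set (Q0 := psi a - psi c) in *.
  assert (psit a - psit c <= k * Q0) by (unfold Q0; lra).
  assert (k * P0 <= psit c - psit b) by (unfold P0; lra).
  apply Rle_trans with (P0 * (k * Q0)). apply Rmult_le_compat_l; lra.
  replace (P0 * (k * Q0)) with ((k * P0) * Q0) by ring.
  apply Rmult_le_compat_r; lra.
Qed.
End K.

Lemma psil_ratio psi lam z : 0 < lam -> 0 < z < 1 ->
  (forall x y, 0 < x -> x < y -> psi x < psi y) ->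
  (forall x, 0 < x -> psi x <> 0) ->
  psil psi lam (lam ^ 2 / z ^ 2) / psil psi lam (lam ^ 2 * z ^ 2) =
  ((lam^2 / z^2 - lam^2) / (lam^2 - lam^2 * z^2)) *
  ((psi (lam^2) - psi (lam^2 * z^2)) / (psi (lam^2/z^2) - psi (lam^2))).
Proof.
  intros Hl Hz Inc Nz.
  set (L := lam ^ 2).
  assert (HL : 0 < L) by (unfold L; nra).
  assert (z2 : 0 < z^2 < 1) by nra.
  assert (Ha : L < L / z^2).
  { apply (Rmult_lt_reg_r (z^2)); [lra|]. unfold Rdiv. rewrite Rmult_assoc, Rinv_l by lra. nra. }
  assert (Hb : L * z^2 < L) by nra.
  assert (Hb0 : 0 < L * z^2) by nra.
  unfold psil. fold L.
  destruct (Req_EM_T (L / z^2) L) as [e|_]; [lra|].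
  destruct (Req_EM_T (L * z^2) L) as [e|_]; [lra|].
  assert (pa := Inc L (L/z^2) HL Ha).
  assert (pb := Inc (L*z^2) L Hb0 Hb).
  assert (pL := Nz L HL).
  field; repeat split; try lra.
  all: try (intro; apply pL; lra).
Qed.

Lemma pointwise psi psit lam z :
  twice_diff_pos psi -> twice_diff_pos psit ->
  (forall x y, 0 < x -> x < y -> psi x < psi y) ->
  (forall x y, 0 < x -> x < y -> psit x < psit y) ->
  (forall x, 0 < x -> psi x <> 0) ->
  (forall x, 0 < x -> psit x <> 0) ->
  (forall xi, 0 < xi -> 0 < Derive psi xi) ->
  (forall xi, 0 < xi -> 0 < Derive psit xi) ->
  (forall xi, 0 < xi ->
     - Derive (Derive psi) xi / Derive psi xi <=
     - Derive (Derive psit) xi / Derive psit xi) ->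
  0 < lam -> 0 < z < 1 ->
  theta_integrand psi lam z <= theta_integrand psit lam z.
Proof.
  intros T1 T2 I1 I2 N1 N2 D1 D2 HC Hl Hz.
  unfold theta_integrand.
  rewrite (psil_ratio psi), (psil_ratio psit) by auto.
  set (L := lam ^ 2).
  assert (HL : 0 < L) by (unfold L; nra).
  assert (z2 : 0 < z^2 < 1) by nra.
  assert (Ha : L < L / z^2).
  { apply (Rmult_lt_reg_r (z^2)); [lra|]. unfold Rdiv. rewrite Rmult_assoc, Rinv_l by lra. nra. }
  assert (Hb : L * z^2 < L) by nra.
  assert (Hb0 : 0 < L * z^2) by nra.
  set (a := L / z^2) in *. set (b := L * z^2) in *.
  assert (K := key psi psit T1 T2 D1 D2 I1 HC b L a Hb0 Hb Ha).
  assert (C : 0 < (a - L) / (L - b)) by (apply Rdiv_lt_0_compat; lra).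
  assert (pa := I1 L a HL Ha). assert (pb := I1 b L Hb0 Hb).
  assert (qa := I2 L a HL Ha). assert (qb := I2 b L Hb0 Hb).
  assert (R1 : 0 < (psi L - psi b) / (psi a - psi L)) by (apply Rdiv_lt_0_compat; lra).
  assert (R2 : (psi L - psi b) / (psi a - psi L) <= (psit L - psit b) / (psit a - psit L)).
  { apply (Rmult_le_reg_r ((psi a - psi L) * (psit a - psit L))); [nra|].
    replace ((psi L - psi b) / (psi a - psi L) * ((psi a - psi L) * (psit a - psit L)))
      with ((psi L - psi b) * (psit a - psit L)) by (field; lra).
    replace ((psit L - psit b) / (psit a - psit L) * ((psi a - psi L) * (psit a - psit L)))
      with ((psit L - psit b) * (psi a - psi L)) by (field; lra).
    exact K. }
  apply Rmult_le_compat_l.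
  - left. apply Rinv_0_lt_compat. lra.
  - apply ln_le.
    + apply Rmult_lt_0_compat; lra.
    + apply Rmult_le_compat_l; lra.
Qed.

Lemma ar0 : at_right 0 (fun x => 0 < x < /2).
Proof.
  assert (h : 0 < /2) by lra. exists (mkposreal _ h). intros x Hx Hp.
  apply (proj1 (Rabs_lt_between' x 0 (/2))) in Hx. simpl in Hx. lra.
Qed.
Lemma al1 : at_left 1 (fun x => /2 < x < 1).
Proof.
  assert (h : 0 < /2) by lra. exists (mkposreal _ h). intros x Hx Hp.
  apply (proj1 (Rabs_lt_between' x 1 (/2))) in Hx. simpl in Hx. lra.
Qed.

Theorem proposition4p1 (psi psit : R -> R) :
  twice_diff_pos psi -> twice_diff_pos psit ->
  (forall x y, 0 < x -> x < y -> psi x < psi y) ->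
  (forall x y, 0 < x -> x < y -> psit x < psit y) ->
  (forall x, 0 < x -> psi x <> 0) ->
  (forall x, 0 < x -> psit x <> 0) ->
  (forall xi, 0 < xi -> 0 < Derive psi xi) ->
  (forall xi, 0 < xi -> 0 < Derive psit xi) ->
  (forall xi, 0 < xi ->
     - Derive (Derive psi) xi / Derive psi xi <=
     - Derive (Derive psit) xi / Derive psit xi) ->
  forall lam, 0 < lam ->
  ex_RInt_gen (theta_integrand psi lam) (at_right 0) (at_left 1) ->
  ex_RInt_gen (theta_integrand psit lam) (at_right 0) (at_left 1) ->
  vartheta psi lam <= vartheta psit lam.
Proof.
  intros T1 T2 I1 I2 N1 N2 D1 D2 HC lam Hl E1 E2.
  pose proof (F1 := Proper_StrongProper _ (at_right_proper_filter 0)).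
  pose proof (F2 := Proper_StrongProper _ (at_left_proper_filter 1)).
  pose proof (C1 := @RInt_gen_correct R_CompleteNormedModule _ _ F1 F2 _ E1).
  pose proof (C2 := @RInt_gen_correct R_CompleteNormedModule _ _ F1 F2 _ E2).
  unfold vartheta.
  set (l1 := RInt_gen (theta_integrand psi lam) (at_right 0) (at_left 1)) in *.
  set (l2 := RInt_gen (theta_integrand psit lam) (at_right 0) (at_left 1)) in *.
  pose proof (G := is_RInt_gen_minus _ _ _ _ C2 C1).
  pose proof (Z := is_RInt_gen_minus _ _ _ _ C2 C2).
  pose proof (N := fun A B => RInt_gen_norm _ _ _ _ A B Z G).
  assert (0 <= l2 - l1).
  { change (minus l2 l1) with (l2 - l1) in N.
    change (minus l2 l2) with (l2 - l2) in N.
    unfold norm in N; simpl in N. unfold abs in N; simpl in N.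
    replace (l2 - l2) with 0 in N by ring. rewrite Rabs_R0 in N.
    apply N.
    - apply (Filter_prod _ _ _ _ _ ar0 al1). intros x y Hx Hy; simpl; lra.
    - apply (Filter_prod _ _ _ _ _ ar0 al1). intros x y Hx Hy z Hz; simpl in *.
      change (minus ?u ?v) with (u - v).
      replace (theta_integrand psit lam z - theta_integrand psit lam z) with 0 by ring.
      unfold norm; simpl; unfold abs; simpl. rewrite Rabs_R0.
      assert (theta_integrand psi lam z <= theta_integrand psit lam z); [|lra].
      apply pointwise; auto; lra. }
  assert (0 < / PI) by (apply Rinv_0_lt_compat, PI_RGT_0).
  nra.
Qed.
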